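(* Let $A$ be a profile and $k$ a committee size such that $|A_i|\le 2$ for all $i\in N_A$ and $|N_A(c)|=|N_A(d)|\le n/k$ for all $c,d\in C$. Then the method of equal shares (with Phase 2 as described) and sequential Phragmén select exactly the same sets of valid candidate sequences on $(A,k)$; in particular they return the same set of winning committees.
   Context: Candidates form a finite set $C$, $|C|=m>1$. An approval profile $A$ has a nonempty finite voter set $N_A$, each $i\in N_A$ having a nonempty ballot $A_i\subseteq C$; $N_A(c)=\{i\in N_A:c\in A_i\}$, $n=|N_A|$. Both rules add candidates one at a time and return all committees obtainable under some tie-breaking. Sequential Phragmén: every voter's budget starts at 0 and increases continuously at unit rate; as soon as the supporters $N_A(c)$ of some unchosen candidate $c$ have total budget 1, such a $c$ (any, in case of ties) is bought and its supporters' budgets are reset to 0; continue until $k$ candidates are bought. Method of equal shares: each voter starts with budget $x_0(i)=k/n$; every candidate costs 1. Phase 1: with budgets $x_r$ after buying $r$ candidates, let $C_r$ be the unchosen candidates $c$ with $\sum_{i\in N_A(c)}x_r(i)\ge1$; if $C_r\neq\emptyset$, buy any $c\in C_r$ minimizing $\rho(c)$, where $\sum_{i\in N_A(c)}\min(\rho(c),x_r(i))=1$, and set $x_{r+1}(i)=x_r(i)-\min(\rho(c),x_r(i))$ for $i\in N_A(c)$, $x_{r+1}(i)=x_r(i)$ otherwise; stop when $C_r=\emptyset$. Phase 2 (if fewer than $k$ bought): run the sequential Phragmén process above, but with voters starting from their remaining Phase 1 budgets instead of 0. *)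

(* Defs.v *)
From HB Require Import structures.
From mathcomp Require Import all_boot all_order all_algebra.
From mathcomp Require Import reals.
Set Implicit Arguments. Unset Strict Implicit. Unset Printing Implicit Defensive.
Import Order.TTheory GRing.Theory Num.Theory.
Local Open Scope ring_scope.

Section Rules.
Variables (R : realType) (C V : finType) (A : V -> {set C}) (k : nat).

Definition supp (c : C) : {set V} := [set i | c \in A i].

Definition suppsum (b : V -> R) (c : C) : R := \sum_(i in supp c) b i.

(* One purchase of candidate c at (relative) time t from budgets b, when the
   candidates in W are already bought: the supporters of c reach total budget
   exactly 1 at time t, and no unchosen candidate reached total budget 1 at an
   earlier time t' in [0, t).  Ties (several candidates reaching 1 at time t)
   are resolved arbitrarily. *)
Definition phr_step (b : V -> R) (W : seq C) (c : C) (t : R) : Prop :=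
  [/\ c \notin W, 0 <= t,
      \sum_(i in supp c) (b i + t) = 1 &
      forall d, d \notin W -> forall t', 0 <= t' -> t' < t ->
        \sum_(i in supp d) (b i + t') < 1].

Definition phr_update (b : V -> R) (c : C) (t : R) : V -> R :=
  fun i => if c \in A i then 0 else b i + t.

Fixpoint phr_from (b : V -> R) (W : seq C) (s : seq C) : Prop :=
  match s with
  | [::] => True
  | c :: s' => exists t, phr_step b W c t /\
                        phr_from (phr_update b c t) (c :: W) s'
  end.

Definition phragmen_seq (s : seq C) : Prop :=
  size s = k /\ phr_from (fun _ => 0) [::] s.

Definition mes_x0 : V -> R := fun _ => k%:R / #|V|%:R.

Definition is_rho (x : V -> R) (c : C) (rho : R) : Prop :=
  \sum_(i in supp c) Num.min rho (x i) = 1 /\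
  forall r, \sum_(i in supp c) Num.min r (x i) = 1 -> rho <= r.

Definition affordable (x : V -> R) (W : seq C) (c : C) : Prop :=
  c \notin W /\ 1 <= suppsum x c.

Definition mes_step (x : V -> R) (W : seq C) (c : C) (rho : R) : Prop :=
  [/\ affordable x W c, is_rho x c rho &
      forall d rd, affordable x W d -> is_rho x d rd -> rho <= rd].

Definition mes_update (x : V -> R) (c : C) (rho : R) : V -> R :=
  fun i => if c \in A i then x i - Num.min rho (x i) else x i.

Fixpoint mes1_from (x : V -> R) (W : seq C) (s : seq C)
    (P : (V -> R) -> seq C -> Prop) : Prop :=
  match s with
  | [::] => P x W
  | c :: s' => exists rho, mes_step x W c rho /\
                          mes1_from (mes_update x c rho) (c :: W) s' P
  end.

Definition mes_seq (s : seq C) : Prop :=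
  size s = k /\
  exists s1 s2, s = s1 ++ s2 /\
    mes1_from mes_x0 [::] s1
      (fun x W => size s1 = k \/
         ((forall d, ~ affordable x W d) /\ phr_from x W s2)).

End Rules.

(* Main.v *)
Require Import Defs.
From HB Require Import structures.
From mathcomp Require Import all_boot all_order all_algebra.
From mathcomp Require Import reals.
From Stdlib Require Import Classical FunctionalExtensionality.
Import Order.TTheory GRing.Theory Num.Theory.
Local Open Scope ring_scope.
Set Implicit Arguments. Unset Strict Implicit.

Section Proof6.
Variables (R : realType) (C V : finType) (A : V -> {set C}) (s : nat).
Hypothesis hsupp : forall d, #|supp A d| = s.
Hypothesis s_gt0 : (0 < s)%N.

Let beta : R := (s%:R)^-1.

Lemma s_pos : 0 < s%:R :> R.
Proof. by rewrite ltr0n. Qed.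

Lemma sbeta : s%:R * beta = 1.
Proof. by rewrite /beta mulfV // pnatr_eq0 -lt0n. Qed.

Lemma beta_ge0 : 0 <= beta.
Proof. by rewrite /beta invr_ge0 ler0n. Qed.

Lemma sumc d (c : R) : \sum_(i in supp A d) c = s%:R * c.
Proof. by rewrite sumr_const hsupp mulr_natl. Qed.

Lemma all_beta (x : V -> R) d : (forall i, x i <= beta) -> 1 <= suppsum A x d ->
  forall i, i \in supp A d -> x i = beta.
Proof.
move=> hx h.
have h0 : \sum_(i in supp A d) (beta - x i) = 0.
  apply/eqP; rewrite eq_le; apply/andP; split.
    by rewrite sumrB sumc sbeta subr_le0.
  by apply: sumr_ge0 => i _; rewrite subr_ge0.
move=> i hi.
have H := psumr_eq0P (P := fun j => j \in supp A d) (F := fun j => beta - x j).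
have /eqP := H (fun j _ => ltac:(by rewrite subr_ge0 hx)) h0 i hi.
by rewrite subr_eq0 => /eqP ->.
Qed.

Lemma le_one (x : V -> R) d : (forall i, x i <= beta) -> suppsum A x d <= 1.
Proof.
move=> hx; rewrite /suppsum -sbeta -(sumc d); apply: ler_sum => i _; exact: hx.
Qed.

Lemma rho_ge (x : V -> R) d r : (forall i, i \in supp A d -> x i = beta) ->
  \sum_(i in supp A d) Num.min r (x i) = 1 -> beta <= r.
Proof.
move=> hx; rewrite leNgt; case: ltP => // hr.
under eq_bigr => i hi do rewrite (hx i hi) (min_l (ltW hr)).
rewrite sumc => hrb; have hrb2 : s%:R * r = s%:R * beta by rewrite sbeta. 
by move: hr; rewrite (mulfI (lt0r_neq0 s_pos) hrb2) ltxx.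

Qed.

Lemma is_rho_beta (x : V -> R) d : (forall i, i \in supp A d -> x i = beta) ->
  is_rho A x d beta.
Proof.
move=> hx; split; last by move=> r; exact: rho_ge.
under eq_bigr => i hi do rewrite (hx i hi) minxx.
by rewrite sumc sbeta.
Qed.

Lemma upd_eq (x : V -> R) c : (forall i, i \in supp A c -> x i = beta) ->
  mes_update A x c beta = phr_update A x c 0.
Proof.
move=> hx; apply: functional_extensionality => i.
rewrite /mes_update /phr_update; case: ifP => h.
  by rewrite (hx i) ?minxx ?subrr // inE.
by rewrite addr0.
Qed.

Lemma mes1_mono (x : V -> R) W s1 (P Q : (V -> R) -> seq C -> Prop) :
  (forall x W, P x W -> Q x W) -> mes1_from A x W s1 P -> mes1_from A x W s1 Q.
Proof.
move=> hPQ; elim: s1 x W => [|c s1 IH] x W /=; first exact: hPQ.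
by case=> rho [h1 h2]; exists rho; split => //; apply: IH.
Qed.

Definition inv (x : V -> R) := forall i, 0 <= x i <= beta.

Lemma inv_upd c (x : V -> R) : inv x -> inv (phr_update A x c 0).
Proof.
move=> hx i; rewrite /phr_update; case: ifP => _.
  by rewrite lexx beta_ge0.
by rewrite addr0 hx.
Qed.

Lemma sum_add0 (x : V -> R) c : \sum_(i in supp A c) (x i + 0) = suppsum A x c.
Proof. by under eq_bigr do rewrite addr0. Qed.

Lemma L (x : V -> R) W s0 : inv x ->
  (phr_from A x W s0 <-> exists s1 s2 : seq C, s0 = s1 ++ s2 /\
     mes1_from A x W s1 (fun x' W' => s2 = [::] \/
        ((forall d, ~ affordable A x' W' d) /\ phr_from A x' W' s2))).
Proof.
move=> hx; split.
  elim: s0 x W hx => [|c s0 IH] x W hx /=.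
    by move=> _; exists [::], [::]; split => //; left.
  case=> t [[hcW ht0 hsum hmin] hrest].
  have hxb : forall i, x i <= beta by move=> i; case/andP: (hx i).
  case: (classic (exists d, affordable A x W d)) => [[d [hdW hd]]|hn].
    have t0 : t = 0.
      apply/eqP; rewrite eq_le ht0 andbT leNgt; apply/negP => tpos.
      have := hmin d hdW 0 (lexx _) tpos.
      rewrite sum_add0 ltNge; move: hd; rewrite /suppsum => ->; done.
    subst t.
    have hc : forall i, i \in supp A c -> x i = beta.
      by apply: all_beta => //; rewrite -sum_add0 hsum.
    have [s1 [s2 [-> hm]]] := IH _ _ (inv_upd c hx) hrest.
    exists (c :: s1), s2; split => //=.
    exists beta; split; last by rewrite upd_eq.
    split.
    - by split => //; rewrite -sum_add0 hsum.
    - exact: is_rho_beta.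
    - move=> d' rd [hd'W hd'] [hr1 _].
      apply: rho_ge hr1; apply: all_beta => //.
  exists [::], (c :: s0); split => //=; right; split.
    by move=> d hd; apply: hn; exists d.
  by exists t; split.
case=> s1 [s2 [-> hm]].
elim: s1 x W hx hm => [|c s1 IH] x W hx /=.
  by case=> [->|[_ h]].
case=> rho [[[hcW haff] hrho hmin] hm].
have hxb : forall i, x i <= beta by move=> i; case/andP: (hx i).
have hc := all_beta hxb haff.
have rb : rho = beta.
  apply/eqP; rewrite eq_le; apply/andP; split.
    by apply: hrho.2; exact: (is_rho_beta hc).1.
  exact: rho_ge hc hrho.1.
subst rho.
exists 0; split; last by rewrite -upd_eq //; apply: IH => //; rewrite upd_eq //; exact: inv_upd.
split => //.
- by rewrite sum_add0 /suppsum; under eq_bigr => i hi do rewrite (hc i hi); rewrite sumc sbeta.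
- by move=> d _ t' h1 h2; move: (le_lt_trans h1 h2); rewrite ltxx.
Qed.

Lemma shift (delta : R) s0 : 0 <= delta <= beta ->
  phr_from A (fun _ => delta) [::] s0 <-> phr_from A (fun _ => 0 : R) [::] s0.
Proof.
case/andP=> hd0 hdb.
case: s0 => [|c s0] //=; split.
  case=> t [[_ ht hsum hmin] hr]; exists (t + delta); split.
    split => //.
    - by rewrite addr_ge0.
    - by move: hsum; rewrite !sumc add0r addrC.
    - move=> d _ t' ht' ht'lt; rewrite sumc add0r.
      case: (ltP t' delta) => htd.
        apply: (lt_le_trans (y := s%:R * delta)).
          by rewrite ltr_pM2l ?s_pos.
        by apply: (le_trans (y := s%:R * beta)); [rewrite ler_pM2l ?s_pos | rewrite sbeta].
      have := hmin d (isT : d \notin [::]) (t' - delta); rewrite sumc (addrC delta) subrK.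
      apply; first by rewrite subr_ge0.
      by rewrite ltrBlDr.
  suff <- : phr_update A (fun _ => delta) c t = phr_update A (fun _ => 0 : R) c (t + delta) by [].
  by apply: functional_extensionality => i; rewrite /phr_update add0r addrC.
case=> t [[_ ht hsum hmin] hr].
have tb : t = beta.
  apply: (mulfI (x := s%:R)); first by rewrite pnatr_eq0 -lt0n.
  by rewrite sbeta; move: hsum; rewrite sumc add0r.
exists (t - delta); split.
  split => //.
  - by rewrite subr_ge0 tb.
  - by rewrite sumc (addrC delta) subrK; move: hsum; rewrite sumc add0r.
  - move=> d _ t' ht' ht'lt; rewrite sumc.
    have := hmin d (isT : d \notin [::]) (delta + t'); rewrite sumc add0r; apply.
      by rewrite addr_ge0.
    by rewrite addrC -ltrBrDr.
suff -> : phr_update A (fun _ => delta) c (t - delta) = phr_update A (fun _ => 0 : R) c t by [].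
by apply: functional_extensionality => i; rewrite /phr_update add0r addrC subrK.
Qed.

End Proof6.

Theorem mainTheorem6 (R : realType) (C V : finType) (A : V -> {set C}) (k : nat) :
  (1 < #|C|)%N ->
  (0 < #|V|)%N ->
  (forall i : V, A i != set0) ->
  (forall i : V, #|A i| <= 2)%N ->
  (forall c d : C, #|supp A c| = #|supp A d|) ->
  (forall c : C, #|supp A c| * k <= #|V|)%N ->
  (forall s : seq C, mes_seq R A k s <-> phragmen_seq R A k s) /\
  (forall S : {set C},
     (exists2 s, mes_seq R A k s & S = [set x in s]) <->
     (exists2 s, phragmen_seq R A k s & S = [set x in s])).
Proof.
move=> hC hV hA _ hS hk.
have [c0 _] : exists c0 : C, true by case/card_gt0P: (ltnW hC) => c0 _; exists c0.
set s := #|supp A c0|.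
have hsupp : forall d, #|supp A d| = s by move=> d; exact: hS.
have s_gt0 : (0 < s)%N.
  case/card_gt0P: hV => i _; case/set0Pn: (hA i) => c hc.
  by rewrite -(hsupp c); apply/card_gt0P; exists i; rewrite inE.
have hd : 0 <= (k%:R / #|V|%:R : R) <= (s%:R)^-1.
  have hn : 0 < #|V|%:R :> R by rewrite ltr0n.
  apply/andP; split; first by rewrite divr_ge0 ?ler0n.
  rewrite ler_pdivrMr // mulrC ler_pdivlMr ?ltr0n // -natrM ler_nat mulnC.
  exact: hk.
have key : forall s0, mes_seq R A k s0 <-> phragmen_seq R A k s0.
  move=> s0; rewrite /mes_seq /phragmen_seq /mes_x0; split.
  - case=> hs [s1 [s2 [e hm]]]; split => //.
    apply/(shift hsupp s_gt0 _ hd).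
    apply/(L hsupp s_gt0); first by move=> i.
    exists s1, s2; split => //; apply: mes1_mono hm => x W [h|h]; last by right.
    left; move: hs; rewrite e size_cat h => /eqP; rewrite -{2}(addn0 k) eqn_add2l.
    by move/eqP/size0nil.
  - case=> hs hp; split => //.
    have := (L hsupp s_gt0 _ _ (fun i => hd)).1 ((shift hsupp s_gt0 _ hd).2 hp).
    case=> s1 [s2 [e hm]]; exists s1, s2; split => //.
    apply: mes1_mono hm => x W [h|h]; last by right.
    by left; move: hs; rewrite e h cats0.
split => // S; split; case=> s0 h e; exists s0 => //; exact/key.
Qed.
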